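(* Let $T:X\to Y$ be an injective linear operator between Archimedean vector lattices. If $T$ satisfies condition $(\beta)$, then the inverse operator $T^{-1}:TX\to X$ is disjointness preserving, i.e. whenever $y_1,y_2\in TX$ satisfy $|y_1|\wedge|y_2|=0$ in $Y$, then $|T^{-1}y_1|\wedge|T^{-1}y_2|=0$ in $X$.
   Context: All vector lattices are Archimedean. For a subset $A$ of a vector lattice $X$, $A^d=\{x\in X: |x|\wedge|a|=0 \text{ for all } a\in A\}$ and $A^{dd}=(A^d)^d$. For $a,b\in X$ we write $a\lhd b$ if $\{a\}^{dd}\subseteq\{b\}^{dd}$. A linear operator $T:X\to Y$ satisfies condition $(\beta)$ if $Ta\lhd Tb$ in $Y$ whenever $a\lhd b$ in $X$. A linear operator is disjointness preserving if it maps disjoint elements to disjoint elements. *)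

(* Defs.v *)
From HB Require Import structures.
From mathcomp Require Import all_boot all_order all_algebra.
From mathcomp Require Import reals.
Set Implicit Arguments. Unset Strict Implicit. Unset Printing Implicit Defensive.
Import Order.TTheory GRing.Theory Num.Theory.
Local Open Scope ring_scope.

Record vlattice (R : realType) (V : lmodType R) := VLattice {
  vle : V -> V -> Prop;
  vsup : V -> V -> V;
  vle_refl : forall x, vle x x;
  vle_anti : forall x y, vle x y -> vle y x -> x = y;
  vle_trans : forall x y z, vle x y -> vle y z -> vle x z;
  vsup_ubl : forall x y, vle x (vsup x y);
  vsup_ubr : forall x y, vle y (vsup x y);
  vsup_lub : forall x y z, vle x z -> vle y z -> vle (vsup x y) z;
  vle_add : forall x y z, vle x y -> vle (x + z) (y + z);
  vle_scale : forall (a : R) x y, 0 <= a -> vle x y -> vle (a *: x) (a *: y)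
}.

Section VL.
Variables (R : realType) (V : lmodType R) (L : vlattice V).

Definition archimedean : Prop :=
  forall x y : V, vle L 0 x -> (forall n : nat, vle L (n%:R *: x) y) -> x = 0.

Definition vinf (x y : V) : V := - vsup L (- x) (- y).
Definition vabs (x : V) : V := vsup L x (- x).
Definition vdisj (x y : V) : Prop := vinf (vabs x) (vabs y) = 0.
Definition dcomp (A : V -> Prop) : V -> Prop :=
  fun x => forall a, A a -> vdisj x a.
Definition ddcomp (A : V -> Prop) : V -> Prop := dcomp (dcomp A).
Definition vlhd (a b : V) : Prop :=
  forall x, ddcomp (fun z => z = a) x -> ddcomp (fun z => z = b) x.
End VL.

Definition cond_beta (R : realType) (X Y : lmodType R)
  (LX : vlattice X) (LY : vlattice Y) (T : X -> Y) : Prop :=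
  forall a b : X, vlhd LX a b -> vlhd LY (T a) (T b).

(* Main.v *)
Require Import Defs.
From HB Require Import structures.
From mathcomp Require Import all_boot all_order all_algebra.
From mathcomp Require Import reals.
Import Order.TTheory GRing.Theory Num.Theory.
Local Open Scope ring_scope.
Set Implicit Arguments. Unset Strict Implicit.

Section Aux.
Variables (R : realType) (V : lmodType R) (L : vlattice V).
Local Notation le := (vle L).
Local Notation sup := (vsup L).

Lemma sup_comm x y : sup x y = sup y x.
Proof. by apply: vle_anti; apply: vsup_lub; (apply: vsup_ubl || apply: vsup_ubr). Qed.

Lemma le_opp x y : le x y -> le (- y) (- x).
Proof.
move=> h; have := vle_add (- x - y) h.
have -> : x + (- x - y) = - y by rewrite addrA subrr add0r.
by have -> : y + (- x - y) = - x by rewrite addrC -addrA addNr addr0.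
Qed.

Lemma le_opp' x y : le (- y) (- x) -> le x y.
Proof. by move/le_opp; rewrite !opprK. Qed.

Lemma inf_lel x y : le (vinf L x y) x.
Proof. by apply: le_opp'; rewrite /vinf opprK; apply: vsup_ubl. Qed.

Lemma inf_ler x y : le (vinf L x y) y.
Proof. by apply: le_opp'; rewrite /vinf opprK; apply: vsup_ubr. Qed.

Lemma inf_glb x y z : le z x -> le z y -> le z (vinf L x y).
Proof.
move=> h1 h2; apply: le_opp'; rewrite /vinf opprK.
by apply: vsup_lub; apply: le_opp.
Qed.

Lemma inf_comm x y : vinf L x y = vinf L y x.
Proof. by rewrite /vinf sup_comm. Qed.

Lemma inf_id x : vinf L x x = x.
Proof.
apply: vle_anti; first exact: inf_lel.
by apply: inf_glb; apply: vle_refl.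
Qed.

Lemma abs_ge0 x : le 0 (vabs L x).
Proof.
set a := vabs L x.
have h1 : le (x + a) (a + a) by apply: vle_add; apply: vsup_ubl.
have h2 : le (- x + x) (a + x) by apply: vle_add; apply: vsup_ubr.
rewrite addNr addrC in h2.
have h3 := vle_trans h2 h1.
have h4 := @vle_scale _ _ L (1 / 2%:R) _ _ (ltW (@divr_gt0 R 1 2%:R ltr01 (ltr0Sn R 1))) h3.
rewrite scaler0 scalerDr -scalerDl -splitr scale1r in h4.
exact: h4.
Qed.

Lemma abs_pos w : le 0 w -> vabs L w = w.
Proof.
move=> h; apply: vle_anti; last exact: vsup_ubl.
apply: vsup_lub; first exact: vle_refl.
have h' := le_opp h; rewrite oppr0 in h'; exact: (vle_trans h' h).
Qed.

Lemma abs0 z : vabs L z = 0 -> z = 0.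
Proof.
move=> h.
have h1 : le z 0 by rewrite -h; apply: vsup_ubl.
have h2 : le (- z) 0 by rewrite -h; apply: vsup_ubr.
apply: (vle_anti h1).
apply: le_opp'; rewrite oppr0; exact: h2.
Qed.

Lemma disj_sym x y : vdisj L x y -> vdisj L y x.
Proof. by rewrite /vdisj inf_comm. Qed.

Lemma self_dd z : ddcomp L (fun u => u = z) z.
Proof. by move=> a ha; apply: disj_sym; apply: ha. Qed.

Lemma disj_self z : vdisj L z z -> z = 0.
Proof. by rewrite /vdisj inf_id; apply: abs0. Qed.

Lemma lhd_inf x1 x2 : vlhd L (vinf L (vabs L x1) (vabs L x2)) x1.
Proof.
set w := vinf L _ _.
have w0 : le 0 w by apply: inf_glb; apply: abs_ge0.
move=> x hx a ha; apply: hx => b -> {b}.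
have := ha _ erefl; rewrite /vdisj (abs_pos w0) => e.
apply: vle_anti.
  rewrite -e; apply: inf_glb; first exact: inf_lel.
  apply: vle_trans (inf_ler _ _) (inf_lel _ _).
by apply: inf_glb => //; apply: abs_ge0.
Qed.

End Aux.

Theorem theorem2p4 (R : realType) (X Y : lmodType R)
  (LX : vlattice X) (LY : vlattice Y)
  (archX : archimedean LX) (archY : archimedean LY)
  (T : {linear X -> Y}) (Tinj : injective T)
  (Tbeta : cond_beta LX LY T) :
  forall x1 x2 : X, vdisj LY (T x1) (T x2) -> vdisj LX x1 x2.
Proof.
move=> x1 x2 hd.
set w := vinf LX (vabs LX x1) (vabs LX x2).
have h1 : vlhd LX w x1 by exact: lhd_inf.
have h2 : vlhd LX w x2 by rewrite /w inf_comm; exact: lhd_inf.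
have d1 : ddcomp LY (fun z => z = T x1) (T w) := Tbeta _ _ h1 _ (@self_dd _ _ LY (T w)).
have d2 : ddcomp LY (fun z => z = T x2) (T w) := Tbeta _ _ h2 _ (@self_dd _ _ LY (T w)).
have e1 : vdisj LY (T w) (T x2).
  apply: d1 => b hb; rewrite hb; exact: (disj_sym hd).
have e2 : vdisj LY (T w) (T w).
  apply: d2 => b hb; rewrite hb; exact: e1.
have e3 : T w = 0 := disj_self e2.
have e4 : T 0 = 0 := raddf0 T.
apply: Tinj. rewrite e3. symmetry. exact: e4.
Qed.
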